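(* For every integer $k\ge 7$, let $C_k$ be the cycle on $k$ vertices and $G=KB(C_k)$. Then for every vertex $q$ of $G$, the graph $G-\{q\}$ is not a biclique graph.
   Context: All graphs are finite, simple, undirected and connected. A biclique of a graph $H$ is a maximal (with respect to vertex-set inclusion) set of vertices inducing a complete bipartite subgraph $K_{r,s}$ with $r,s\ge 1$. The biclique graph $KB(H)$ is the intersection graph of the family of all bicliques of $H$: its vertices are the bicliques of $H$, and two bicliques are adjacent iff they share at least one vertex. A graph $G$ is a biclique graph if $G=KB(H)$ (up to isomorphism) for some graph $H$. *)

(* Defs.v *)
From mathcomp Require Import all_boot.
Set Implicit Arguments. Unset Strict Implicit. Unset Printing Implicit Defensive.

Definition simple_graph (T : finType) (e : rel T) : Prop :=
  symmetric e /\ irreflexive e.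

Definition connected_graph (T : finType) (e : rel T) : Prop :=
  forall x y : T, connect e x y.

Definition induces_Krs (T : finType) (e : rel T) (B : {set T}) : bool :=
  [exists X : {set T}, exists Y : {set T},
     [&& X :|: Y == B, [disjoint X & Y], X != set0, Y != set0,
         [forall x in X, forall y in Y, e x y],
         [forall x in X, forall x' in X, ~~ e x x'] &
         [forall y in Y, forall y' in Y, ~~ e y y']]].

Definition is_biclique (T : finType) (e : rel T) (B : {set T}) : bool :=
  maxset (induces_Krs e) B.

Definition KB_vertex (T : finType) (e : rel T) : finType :=
  {B : {set T} | is_biclique e B}.

Definition KB_rel (T : finType) (e : rel T) : rel (KB_vertex e) :=
  fun B1 B2 => (B1 != B2) && (val B1 :&: val B2 != set0).


Definition graph_iso (T1 T2 : finType) (e1 : rel T1) (e2 : rel T2) : Prop :=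
  exists f : T1 -> T2, bijective f /\ forall x y, e2 (f x) (f y) = e1 x y.

Definition is_biclique_graph (V : finType) (g : rel V) : Prop :=
  exists (T : finType) (e : rel T),
    simple_graph e /\ connected_graph e /\ graph_iso (@KB_rel T e) g.

Definition cycle_rel (k : nat) : rel 'I_k :=
  fun i j => (val j == (val i).+1 %% k) || (val i == (val j).+1 %% k).


Definition del_vertex_type (V : finType) (q : V) : finType := {v : V | v != q}.

Definition del_vertex_rel (V : finType) (g : rel V) (q : V) : rel (del_vertex_type q) :=
  fun x y => g (val x) (val y).

Arguments KB_vertex : clear implicits.
Arguments KB_rel : clear implicits.
Arguments cycle_rel : clear implicits.
Arguments del_vertex_type : clear implicits.
Arguments del_vertex_rel : clear implicits.

(* Main.v *)
Require Import Defs.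
From mathcomp Require Import all_boot zify.
From Stdlib Require Import Classical.
Set Implicit Arguments. Unset Strict Implicit. Unset Printing Implicit Defensive.


Definition adjn (k a b : nat) : Prop :=
  b = a.+1 \/ a = b.+1 \/ (a.+1 = k /\ b = 0) \/ (b.+1 = k /\ a = 0).

Lemma modS k a : a < k -> a.+1 %% k = if a.+1 == k then 0 else a.+1.
Proof.
move=> ak; case: eqP => [->|ne]; first by rewrite modnn.
by rewrite modn_small //; lia.
Qed.

Lemma cycP k (i j : 'I_k) : 2 < k -> cycle_rel k i j <-> adjn k i j.
Proof.
case: i j => [i Hi] [j Hj] hk; rewrite /cycle_rel /adjn /= (modS Hi) (modS Hj).
case E1: (i.+1 == k); case E2: (j.+1 == k); split => HH; lia.
Qed.

Lemma ar_final k j m x y n p : 7 <= k -> j < k -> m < k -> x < k -> y < k ->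
  (j.+1 = k /\ n = 0 \/ j.+1 < k /\ n = j.+1) ->
  (j = 0 /\ p = k.-1 \/ 0 < j /\ p = j.-1) ->
  (x = m \/ adjn k m x) -> (x = n \/ adjn k n x) ->
  (y = m \/ adjn k m y) -> (y = p \/ adjn k p y) -> m <> n -> m <> p -> m = j.
Proof. rewrite /adjn.
move=> ? ? ? ? ? [[? ?]|[? ?]] [[? ?]|[? ?]]; subst n p;
 (case=> [?|[?|[?|[[? ?]|[? ?]]]]]; try subst x);
 (case=> [?|[?|[?|[[? ?]|[? ?]]]]]); lia.
Qed.


Section Abs.
Variables (T : finType) (e : rel T).
Hypothesis esym : symmetric e.
Hypothesis eirr : irreflexive e.

Lemma K0 (B : {set T}) : induces_Krs e B ->
  exists X : {set T}, (forall u, u \in B -> exists v, v \in B /\ e u v) /\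
    forall u v, u \in B -> v \in B -> e u v = ((u \in X) != (v \in X)).
Proof.
move=> /existsP[X /existsP[Y /and5P[/eqP HB Hd HX HY /and3P[Hxy HXX HYY]]]].
exists X; split.
- move=> u; rewrite -HB inE => /orP[uX|uY].
  + case/set0Pn: HY => y yY; exists y; split; first by rewrite inE yY orbT.
    by move/forall_inP: Hxy => /(_ u uX)/forall_inP/(_ y yY).
  + case/set0Pn: HX => x xX; exists x; split; first by rewrite inE xX.
    rewrite esym. by move/forall_inP: Hxy => /(_ x xX)/forall_inP/(_ u uY).
have XY : forall z, z \in X -> z \in Y -> False.
  by move=> z zX zY; move: Hd; rewrite disjoint_subset => /subsetP/(_ z zX); rewrite inE zY.
move=> u v; rewrite -!HB !inE => /orP[uX|uY] /orP[vX|vY].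
- rewrite uX vX /=. by move/forall_inP: HXX => /(_ u uX)/forall_inP/(_ v vX)/negbTE.
- rewrite uX /=. have -> : (v \in X) = false by apply/negP=> vX; exact: XY vX vY.
  by move/forall_inP: Hxy => /(_ u uX)/forall_inP/(_ v vY) ->.
- have -> : (u \in X) = false by apply/negP=> uX; exact: XY uX uY.
  rewrite vX /= esym. by move/forall_inP: Hxy => /(_ v vX)/forall_inP/(_ u uY) ->.
- have -> : (u \in X) = false by apply/negP=> uX; exact: XY uX uY.
  have -> : (v \in X) = false by apply/negP=> vX; exact: XY vX vY.
  by move/forall_inP: HYY => /(_ u uY)/forall_inP/(_ v vY)/negbTE.
Qed.

Lemma K1 B a : induces_Krs e B -> a \in B -> exists b, b \in B /\ e a b.
Proof. by case/K0=> X [H _]; apply: H. Qed.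

Lemma K2 B a b c : induces_Krs e B -> a \in B -> b \in B -> c \in B ->
  e a b -> e c a \/ e c b.
Proof.
case/K0=> X [_ H] aB bB cB; rewrite (H _ _ aB bB) (H _ _ cB aB) (H _ _ cB bB).
by case: (a \in X); case: (b \in X); case: (c \in X); auto.
Qed.

Lemma K3 B a b c : induces_Krs e B -> a \in B -> b \in B -> c \in B ->
  ~~ e a b -> e c a = e c b.
Proof.
case/K0=> X [_ H] aB bB cB; rewrite (H _ _ aB bB) (H _ _ cB aB) (H _ _ cB bB).
by case: (a \in X); case: (b \in X); case: (c \in X).
Qed.

Lemma edgeK a b : e a b -> induces_Krs e [set a; b].
Proof.
move=> ab; have ne : a != b by apply: contraTneq ab => ->; rewrite eirr.
apply/existsP; exists [set a]; apply/existsP; exists [set b].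
apply/and5P; split.
- by [].

- by rewrite disjoint_sym disjoints1 inE eq_sym.
- by apply/set0Pn; exists a; rewrite inE.
- by apply/set0Pn; exists b; rewrite inE.
apply/and3P; split.
- by apply/forall_inP=> x; rewrite inE => /eqP->; apply/forall_inP=> y; rewrite inE => /eqP->.
- by apply/forall_inP=> x; rewrite inE => /eqP->; apply/forall_inP=> y; rewrite inE => /eqP->; rewrite eirr.
- by apply/forall_inP=> x; rewrite inE => /eqP->; apply/forall_inP=> y; rewrite inE => /eqP->; rewrite eirr.
Qed.

Lemma p3K a b c : e a b -> e b c -> ~~ e a c -> a != c -> induces_Krs e [set a; b; c].
Proof.
move=> ab bc nac ne.
apply/existsP; exists [set b]; apply/existsP; exists [set a; c].
apply/and5P; split.
- by apply/eqP/setP=> z; rewrite !inE; case: (z == a); case: (z == b); case: (z == c).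
- rewrite disjoints1 !inE; apply/negP=> /orP[/eqP E|/eqP E].
    by move: ab; rewrite E eirr.
  by move: bc; rewrite E eirr.
- by apply/set0Pn; exists b; rewrite inE.
- by apply/set0Pn; exists a; rewrite !inE eqxx.
apply/and3P; split.
- apply/forall_inP=> x; rewrite inE => /eqP->; apply/forall_inP=> y; rewrite !inE => /orP[]/eqP->//.
  by rewrite esym.
- by apply/forall_inP=> x; rewrite inE => /eqP->; apply/forall_inP=> y; rewrite inE => /eqP->; rewrite eirr.
- apply/forall_inP=> x; rewrite !inE => /orP[]/eqP->; apply/forall_inP=> y; rewrite !inE => /orP[]/eqP->;
  by rewrite ?eirr // esym.
Qed.

Variables B1 B2 : {set T}.
Hypothesis NS : forall S, induces_Krs e S ->
  forall x y u w, x \in S -> x \in B1 -> y \in S -> y \in B2 ->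
  u \in S -> u \notin B1 -> w \in S -> w \notin B2 -> False.
Hypothesis H1 : induces_Krs e B1.
Hypothesis H2 : induces_Krs e B2.

Lemma F2 r p q : r \in B1 -> r \in B2 -> p \in B1 -> p \notin B2 ->
  q \in B2 -> q \notin B1 -> e r p -> e r q -> False.
Proof.
move=> r1 r2 p1 p2 q2 q1 rp rq.
case epq: (e p q).
  by apply: (NS (edgeK epq)) (_ : p \in _) p1 (_ : q \in _) q2 (_ : q \in _) q1 (_ : p \in _) p2;
     rewrite !inE eqxx ?orbT.
have ne : p != q by apply: contraNneq p2 => ->.
have K := p3K (_ : e p r) rq (negbT epq) ne.
rewrite esym in K; have {}K := K rp.
by apply: (NS K) (_ : p \in _) p1 (_ : q \in _) q2 (_ : q \in _) q1 (_ : p \in _) p2;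
     rewrite !inE eqxx ?orbT.
Qed.

Lemma CC p r : p \in B1 -> p \notin B2 -> r \in B1 -> r \in B2 ->
  exists r', [/\ r' \in B1, r' \in B2 & e p r'].
Proof.
move=> p1 p2 r1 r2; apply: NNPP => Hn.
have nadj : forall z, z \in B1 -> z \in B2 -> ~~ e p z.
  by move=> z z1 z2; apply/negP=> pz; apply: Hn; exists z.
have npr := nadj r r1 r2.
have [s [s2 rs]] := K1 H2 r2.
have [y [y1 py]] := K1 H1 p1.
have y2 : y \notin B2 by apply/negP=> y2; move: (nadj y y1 y2); rewrite py.
have ry : e r y.
  have := K3 H1 p1 r1 y1 npr; rewrite esym py => E; by rewrite esym -E.
case s1: (s \in B1).
  have := K3 H1 p1 r1 s1 npr; rewrite (esym s r) rs esym => ps.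
  by move: (nadj s s1 s2); rewrite ps.
exact: (F2 r1 r2 y1 y2 s2 (negbT s1) ry rs).
Qed.
End Abs.

Lemma NS_sym (T : finType) (e : rel T) (B1 B2 : {set T}) :
  (forall S, induces_Krs e S ->
  forall x y u w, x \in S -> x \in B1 -> y \in S -> y \in B2 ->
  u \in S -> u \notin B1 -> w \in S -> w \notin B2 -> False) ->
  (forall S, induces_Krs e S ->
  forall x y u w, x \in S -> x \in B2 -> y \in S -> y \in B1 ->
  u \in S -> u \notin B2 -> w \in S -> w \notin B1 -> False).
Proof. move=> NS S KS x y u w xS x2 yS y1 uS u2 wS w1; exact: (NS S KS y x w u). Qed.

Lemma CD (T : finType) (e : rel T) (esym : symmetric e) (eirr : irreflexive e) (B1 B2 : {set T})
  (NS : forall S, induces_Krs e S ->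
  forall x y u w, x \in S -> x \in B1 -> y \in S -> y \in B2 ->
  u \in S -> u \notin B1 -> w \in S -> w \notin B2 -> False)
  (H1 : induces_Krs e B1) (H2 : induces_Krs e B2) p p' q r0 :
  p \in B1 -> p \notin B2 -> p' \in B1 -> p' \notin B2 -> e p p' ->
  q \in B2 -> q \notin B1 -> r0 \in B1 -> r0 \in B2 -> False.
Proof.
move=> p1 p2 p'1 p'2 pp q2 q1 r1 r2.
have [r [r2' r1' qr]] := @CC T e esym eirr B2 B1 (NS_sym NS) H2 H1 q r0 q2 q1 r2 r1.
case: (K2 esym H1 p1 p'1 r1' pp) => [rp|rp'].
  by apply: (@F2 T e esym eirr B1 B2 NS r p q) => //; rewrite esym.
by apply: (@F2 T e esym eirr B1 B2 NS r p' q) => //; rewrite esym.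
Qed.

Lemma open_edge (T : finType) (e : rel T) (esym : symmetric e) (eirr : irreflexive e)
  (B1 B2 B3 : {set T}) r0 a :
  is_biclique e B1 -> is_biclique e B2 -> is_biclique e B3 -> B1 != B2 ->
  r0 \in B1 -> r0 \in B2 -> a \in B1 -> a \in B3 -> (forall z, z \in B3 -> z \notin B2) ->
  exists B4, [/\ is_biclique e B4, B4 != B1, B4 != B2,
     (exists x, x \in B4 /\ x \in B1) & (exists y, y \in B4 /\ y \in B2)].
Proof.
move=> M1 M2 M3 n12 r1 r2 a1 a3 H3; apply: NNPP => Hn.
have H1 := maxsetp M1; have H2 := maxsetp M2; have K3 := maxsetp M3.
have NS : forall S, induces_Krs e S ->
  forall x y u w, x \in S -> x \in B1 -> y \in S -> y \in B2 ->
  u \in S -> u \notin B1 -> w \in S -> w \notin B2 -> False.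
  move=> S KS x y u w xS x1 yS y2 uS u1 wS w2.
  have [B MB /subsetP sB] := maxset_exists KS.
  apply: Hn; exists B; split => //.
  - by apply/negP=> /eqP E; move: u1; rewrite -E sB.
  - by apply/negP=> /eqP E; move: w2; rewrite -E sB.
  - by exists x; rewrite sB.
  - by exists y; rewrite sB.
have [q q2 q1] : exists2 q, q \in B2 & q \notin B1.
  case/boolP: (B2 \subset B1) => [s21|/subsetPn [q ? ?]]; last by exists q.
  by move: n12; rewrite (maxsetsup M2 H1 s21) eqxx.
have a2 := H3 a a3.
have [z [z3 az]] := K1 esym K3 a3.
have z2 := H3 z z3.
case z1: (z \in B1).
  exact: (CD esym eirr NS H1 H2 a1 a2 z1 z2 az q2 q1 r1 r2).
have [r [r1' r2' ar]] := CC esym eirr NS H1 H2 a1 a2 r1 r2.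
have zr : z != r by apply: contraFneq z1 => ->.
case ezr: (e z r).
  by apply: (NS _ (edgeK eirr ezr) r r z z) => //; rewrite ?inE ?eqxx ?orbT ?z1.
have K := p3K esym eirr (_ : e z a) ar (negbT ezr) zr.
rewrite esym in K; have {}K := K az.
by apply: (NS _ K r r z z) => //; rewrite ?inE ?eqxx ?orbT ?z1.
Qed.


Section Cyc.
Variable k : nat.
Hypothesis hk : 7 <= k.
Let k0 : 0 < k := leq_trans (isT : 0 < 7) hk.
Let k2 : 2 < k := leq_trans (isT : 2 < 7) hk.

Definition S (i : 'I_k) : {set 'I_k} := [set x | (x == i) || cycle_rel k i x].

Lemma memS i x : x \in S i <-> (nat_of_ord x = nat_of_ord i \/ adjn k i x).
Proof.
rewrite inE -(cycP _ _ k2); split.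
  by case/orP=> [/eqP->|]; auto.
by case=> [E|->]; rewrite ?orbT // (_ : x = i) ?eqxx //; apply: val_inj.
Qed.

Definition nxt (i : 'I_k) : 'I_k := Ordinal (ltn_pmod i.+1 k0).
Definition prv (i : 'I_k) : 'I_k := Ordinal (ltn_pmod (i + k.-1) k0).

Lemma nxtE (i : 'I_k) : (i.+1 = k /\ nat_of_ord (nxt i) = 0) \/ (i.+1 < k /\ nat_of_ord (nxt i) = i.+1).
Proof. have Hi := ltn_ord i; rewrite /= (modS Hi); case: eqP => E; [left|right]; lia. Qed.

Lemma prvE (i : 'I_k) : (nat_of_ord i = 0 /\ nat_of_ord (prv i) = k.-1) \/
   (0 < i /\ nat_of_ord (prv i) = (nat_of_ord i).-1).
Proof.
have Hi := ltn_ord i; rewrite /=; case: (posnP i) => [i0|ip]; [left|right].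
  by rewrite i0 add0n modn_small //; lia.
rewrite (_ : i + k.-1 = (nat_of_ord i).-1 + k); last by lia.
by rewrite modnDr modn_small //; lia.
Qed.


Lemma adjn_sym a b : adjn k a b -> adjn k b a.
Proof. rewrite /adjn; lia. Qed.

Lemma ar_four' a b c d : adjn k a b -> adjn k a c -> adjn k d b -> adjn k d c -> a <> d -> b <> c -> False.
Proof. rewrite /adjn. lia. Qed.

Lemma charK B : induces_Krs (cycle_rel k) B -> exists x, B \subset S x.
Proof.
case/existsP=> X /existsP[Y /and5P[/eqP HB _ /set0Pn[x0 x0X] /set0Pn[y0 y0Y] /and3P[Hxy _ _]]].
have E : forall x y, x \in X -> y \in Y -> adjn k x y.
  move=> x y xX yY; apply/cycP => //.
  by move/forall_inP: Hxy => /(_ x xX)/forall_inP/(_ y yY).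
case/boolP: [forall x in X, x == x0] => [/forall_inP AX|/forall_inPn [x1 x1X ne1]].
  exists x0; apply/subsetP=> z; rewrite -HB inE => /orP[zX|zY]; apply/memS.
    by left; rewrite (eqP (AX z zX)).
  by right; apply: E.
case/boolP: [forall y in Y, y == y0] => [/forall_inP AY|/forall_inPn [y1 y1Y ne2]].
  exists y0; apply/subsetP=> z; rewrite -HB inE => /orP[zX|zY]; apply/memS.
    by right; apply: adjn_sym; apply: E.
  by left; rewrite (eqP (AY z zY)).
exfalso; apply: (ar_four' (E _ _ x0X y0Y) (E _ _ x0X y1Y) (E _ _ x1X y0Y) (E _ _ x1X y1Y)).
  by move=> H; move/negP: ne1; apply; apply/eqP/val_inj.
by move=> H; move/negP: ne2; apply; apply/eqP/val_inj.
Qed.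

Lemma S_ind i : induces_Krs (cycle_rel k) (S i).
Proof.
apply/existsP; exists [set i]; apply/existsP; exists [set x | cycle_rel k i x].
apply/and5P; split.
- by apply/eqP/setP => z; rewrite !inE.
- rewrite disjoints1 inE; apply/negP => /(cycP _ _ k2); rewrite /adjn; lia.
- by apply/set0Pn; exists i; rewrite inE.
- apply/set0Pn; exists (nxt i); rewrite inE; apply/(cycP _ _ k2).
  by case: (nxtE i); rewrite /adjn; lia.
apply/and3P; split.
- by apply/forall_inP=> x; rewrite inE => /eqP->; apply/forall_inP=> y; rewrite inE.
- apply/forall_inP=> x; rewrite inE => /eqP->; apply/forall_inP=> y; rewrite inE => /eqP->.
  by apply/negP => /(cycP _ _ k2); rewrite /adjn; lia.
- apply/forall_inP=> x; rewrite inE => /(cycP _ _ k2) ix; apply/forall_inP=> y;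
  rewrite inE => /(cycP _ _ k2) iy.
  apply/negP => /(cycP _ _ k2); move: ix iy; rewrite /adjn; lia.
Qed.

Lemma Ssub a b : S a \subset S b -> nat_of_ord a = nat_of_ord b.
Proof.
move/subsetP=> sub.
have /memS h1 : a \in S b by apply: sub; apply/memS; left.
have /memS h2 : nxt a \in S b by apply: sub; apply/memS; right; case: (nxtE a); rewrite /adjn; lia.
have /memS h3 : prv a \in S b by apply: sub; apply/memS; right; case: (prvE a); rewrite /adjn; lia.
have := nxtE a; have := prvE a; move: h1 h2 h3; rewrite /adjn.
have := ltn_ord a; have := ltn_ord b; have := ltn_ord (nxt a); have := ltn_ord (prv a).
lia.
Qed.

Lemma S_bic i : is_biclique (cycle_rel k) (S i).
Proof.
apply/maxsetP; split; first exact: S_ind.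
move=> B KB sub; case: (charK KB) => x sx.
have E : i = x by apply: val_inj; apply: Ssub; apply: subset_trans sx.
by subst x; apply/eqP; rewrite eqEsubset sx sub.
Qed.

Lemma bic_char B : is_biclique (cycle_rel k) B -> exists i, B = S i.
Proof.
move=> M; case: (charK (maxsetp M)) => x sx; exists x.
by rewrite (maxsetsup M (S_ind x) sx).
Qed.

End Cyc.


Definition vert k (hk : 7 <= k) (i : 'I_k) : KB_vertex 'I_k (cycle_rel k) :=
  exist _ (S i) (S_bic hk i).

Lemma vert_neq k (hk : 7 <= k) (i i' : 'I_k) :
  nat_of_ord i <> nat_of_ord i' -> vert hk i != vert hk i'.
Proof.
move=> H; apply/negP => /eqP E; have /= E' := congr1 val E.
apply: H; apply: (Ssub hk); move: E'; rewrite /vert /= => ->; exact: subxx.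
Qed.

Unset Implicit Arguments.
Theorem mainTheorem2 (k : nat) (hk : 7 <= k)
    (q : KB_vertex 'I_k (cycle_rel k)) :
  ~ is_biclique_graph (del_vertex_rel _ (KB_rel 'I_k (cycle_rel k)) q).
Proof.
case=> T [e [[esym eirr] [_ [f [[g fK gK] Hf]]]]].
have [j Ej] := bic_char hk (valP q).
have qE : q = vert hk j by apply: val_inj.
subst q.
have k7 := hk.
pose a1 := nxt hk j; pose b1 := prv hk j; pose c1 := nxt hk (nxt hk j).
have Ha := nxtE hk j; have Hb := prvE hk j; have Hc := nxtE hk (nxt hk j).
have ltj := ltn_ord j; have lta := ltn_ord a1; have ltb := ltn_ord b1; have ltc := ltn_ord c1.
have nab : nat_of_ord a1 <> nat_of_ord b1 by rewrite /a1 /b1; lia.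
have nac : nat_of_ord a1 <> nat_of_ord c1 by rewrite /a1 /c1; lia.
have nbc : nat_of_ord b1 <> nat_of_ord c1 by rewrite /b1 /c1; lia.
have na : vert hk a1 != vert hk j by apply: vert_neq; rewrite /a1; lia.
have nb : vert hk b1 != vert hk j by apply: vert_neq; rewrite /b1; lia.
have nc : vert hk c1 != vert hk j by apply: vert_neq; rewrite /c1; lia.
pose A : del_vertex_type _ (vert hk j) := exist (fun v => v != vert hk j) _ na.
pose Bv : del_vertex_type _ (vert hk j) := exist (fun v => v != vert hk j) _ nb.
pose C : del_vertex_type _ (vert hk j) := exist (fun v => v != vert hk j) _ nc.
have HE : forall u v, KB_rel T e (g u) (g v) = KB_rel _ (cycle_rel k) (val u) (val v).
  by move=> u v; rewrite -Hf !gK.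
have HE2 : forall w u, KB_rel T e w (g u) = KB_rel _ (cycle_rel k) (val (f w)) (val u).
  by move=> w u; rewrite -Hf gK.
have Rab : KB_rel T e (g A) (g Bv).
  rewrite HE /KB_rel; change (\val A) with (vert hk a1); change (\val Bv) with (vert hk b1).
  rewrite (vert_neq hk nab) /=.
  apply/set0Pn; exists j; rewrite inE; apply/andP; split; apply/(memS hk); right;
  rewrite /a1 /b1 /adjn; lia.
have Rac : KB_rel T e (g A) (g C).
  rewrite HE /KB_rel; change (\val A) with (vert hk a1); change (\val C) with (vert hk c1).
  rewrite (vert_neq hk nac) /=.
  apply/set0Pn; exists a1; rewrite inE; apply/andP; split; apply/(memS hk); [left=>//|right].
  rewrite /a1 /c1 /adjn; lia.
have Rbc : ~~ KB_rel T e (g Bv) (g C).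
  rewrite HE /KB_rel; change (\val Bv) with (vert hk b1); change (\val C) with (vert hk c1).
  rewrite negb_and negbK; apply/orP; right; apply/negP => /set0Pn [x].
  rewrite inE => /andP [/(memS hk) hx1 /(memS hk) hx2].
  have ltx := ltn_ord x.
  move: hx1 hx2; rewrite /b1 /c1 /adjn; lia.
have nBC : g Bv != g C.
  apply/negP => /eqP E; have := congr1 f E; rewrite !gK => /(congr1 val).
  change (vert hk b1 = vert hk c1 -> False); apply/eqP; exact: vert_neq.
move: Rab; rewrite /KB_rel => /andP [n12 /set0Pn [r0]]; rewrite inE => /andP [r1 r2].
move: Rac; rewrite /KB_rel => /andP [_ /set0Pn [a0]]; rewrite inE => /andP [a01 a03].
have H3 : forall z, z \in val (g C) -> z \notin val (g Bv).
  move=> z z3; apply/negP => z2; move/negP: Rbc; apply; rewrite /KB_rel nBC /=.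
  by apply/set0Pn; exists z; rewrite inE z2 z3.
have n12' : val (g A) != val (g Bv) by rewrite val_eqE.
have [B4 [M4 n41 n42 [x [x4 x1]] [y [y4 y2]]]] :=
  open_edge esym eirr (valP (g A)) (valP (g Bv)) (valP (g C)) n12' r1 r2 a01 a03 H3.
pose w : KB_vertex T e := exist _ B4 M4.
have Rw1 : KB_rel T e w (g A).
  rewrite /KB_rel; apply/andP; split; first by rewrite -val_eqE.
  by apply/set0Pn; exists x; rewrite inE x4 x1.
have Rw2 : KB_rel T e w (g Bv).
  rewrite /KB_rel; apply/andP; split; first by rewrite -val_eqE.
  by apply/set0Pn; exists y; rewrite inE y4 y2.
rewrite HE2 in Rw1; rewrite HE2 in Rw2.
have dq : val (f w) != vert hk j := valP (f w).
move: Rw1 Rw2 dq; set d := val (f w) => Rw1 Rw2 dq.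
have [m Em] := bic_char hk (valP d).
move: Rw1; rewrite /KB_rel; change (\val A) with (vert hk a1).
move=> /andP [nd1 /set0Pn [x']]; rewrite inE Em => /andP [/(memS hk) hm1 /(memS hk) ha1].
move: Rw2; rewrite /KB_rel; change (\val Bv) with (vert hk b1).
move=> /andP [nd2 /set0Pn [y']]; rewrite inE Em => /andP [/(memS hk) hm2 /(memS hk) hb2].
have dE : forall i, nat_of_ord m = nat_of_ord i -> d = vert hk i.
  move=> i E; apply: val_inj; rewrite Em; congr S; exact: val_inj.
have nma : nat_of_ord m <> nat_of_ord a1 by move=> /dE E; move: nd1; rewrite E eqxx.
have nmb : nat_of_ord m <> nat_of_ord b1 by move=> /dE E; move: nd2; rewrite E eqxx.
have := @ar_final k j m x' y' (nat_of_ord a1) (nat_of_ord b1) hk (ltn_ord j) (ltn_ord m) (ltn_ord x') (ltn_ord y') Ha Hb hm1 ha1 hm2 hb2 nma nmb.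
by move=> /dE E; move: dq; rewrite E eqxx.
Qed.
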